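(* Let $(M,d)$ be a complete pointed metric space, let $y\in M$, and let $\mu$ be a positive Radon measure on $\beta\widetilde{M}$ concentrated on $p^{-1}\big((\mathcal{R}(M)\setminus\{y\})\times\{y\}\big)$. Then $\mu\preccurlyeq\nu$ for every positive Radon measure $\nu$ on $\beta\widetilde{M}$ with $\Phi^*\nu=\Phi^*\mu$. In particular, $\mu$ is $\preccurlyeq$-minimal. The same conclusions hold if $\mu$ is concentrated on $p^{-1}\big(\{x\}\times(\mathcal{R}(M)\setminus\{x\})\big)$ for some $x\in M$.
   Context: $\mathrm{Lip}_0(M)$: Lipschitz $f:M\to\mathbb{R}$ with $f(0)=0$ ($0$ the base point) normed by the Lipschitz constant. $\widetilde{M}=\{(x,y)\in M\times M:x\ne y\}$, $\beta\widetilde{M}$ its Stone–Čech compactification; Radon measures identified with $C(\beta\widetilde{M})^*$. $\Phi:\mathrm{Lip}_0(M)\to C(\beta\widetilde{M})$ maps $f$ to the continuous extension of $(x,y)\mapsto(f(x)-f(y))/d(x,y)$; $\Phi^*$ is its adjoint. $M^u$ is the uniform (Samuel) compactification of $M$; $p_1,p_2:\beta\widetilde{M}\to M^u$ continuously extend the coordinate projections, $p=(p_1,p_2)$. $\mathcal{R}(M)=\{\xi\in M^u:\overline{d_0}(\xi)<\infty\}$ where $\overline{d_0}:M^u\to[0,\infty]$ continuously extends $x\mapsto d(x,0)$. $G$ is the set of $g\in C(\beta\widetilde{M})$ with $d(x,y)g(x,y)\le d(x,u)g(x,u)+d(u,y)g(u,y)$ for all distinct $x,u,y\in M$; $\mu\preccurlyeq\nu$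 iff $\int g\,d\mu\le\int g\,d\nu$ for all $g\in G$; $\mu$ is $\preccurlyeq$-minimal if every positive $\nu\preccurlyeq\mu$ satisfies $\mu\preccurlyeq\nu$. Throughout, $M$ has at least three distinct points. *)

(* Defs.v *)
From HB Require Import structures.
From mathcomp Require Import all_boot all_order all_algebra.
From mathcomp Require Import all_classical all_reals all_analysis.
Set Implicit Arguments. Unset Strict Implicit. Unset Printing Implicit Defensive.
Import Order.TTheory GRing.Theory Num.Theory numFieldNormedType.Exports.
Local Open Scope classical_set_scope.
Local Open Scope ring_scope.

Definition is_metric (R : realType) (M : Type) (d : M -> M -> R) : Prop :=
  (forall x y, d x y = 0 <-> x = y) /\
  (forall x y, d x y = d y x) /\
  (forall x y z, d x z <= d x y + d y z).

Definition cauchy_seq (R : realType) (M : Type) (d : M -> M -> R) (s : nat -> M) :=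
  forall eps : R, 0 < eps -> exists N : nat, forall m n : nat,
    (N <= m)%N -> (N <= n)%N -> d (s m) (s n) < eps.

Definition complete_metric (R : realType) (M : Type) (d : M -> M -> R) :=
  forall s : nat -> M, cauchy_seq d s ->
    exists l : M, forall eps : R, 0 < eps -> exists N : nat, forall n : nat,
      (N <= n)%N -> d (s n) l < eps.

Definition lip0 (R : realType) (M : Type) (d : M -> M -> R) (o : M) (f : M -> R) :=
  f o = 0 /\ exists L : R, forall x y, `|f x - f y| <= L * d x y.

Definition bounded_unif_cont (R : realType) (M : Type) (d : M -> M -> R) (f : M -> R) :=
  (exists C : R, forall x, `|f x| <= C) /\
  forall eps : R, 0 < eps -> exists2 delta : R, 0 < delta &
    forall x y, d x y < delta -> `|f x - f y| < eps.

(* Functions on Mtilde = {(x,y) : x <> y} are represented as functions    *)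
(* M -> M -> X whose values off Mtilde are irrelevant.  Mtilde carries the *)
(* topology of M x M (metric max(d(x,x'), d(y,y'))).                      *)
Definition bounded_cont_tilde (R : realType) (M : Type) (d : M -> M -> R)
    (f : M -> M -> R) :=
  (exists C : R, forall x y, x <> y -> `|f x y| <= C) /\
  forall x y, x <> y -> forall eps : R, 0 < eps -> exists2 delta : R, 0 < delta &
    forall x' y', x' <> y' -> d x x' < delta -> d y y' < delta ->
      `|f x y - f x' y'| < eps.

Definition stone_cech_tilde (R : realType) (M : Type) (d : M -> M -> R)
    (K : ptopologicalType) (e : M -> M -> K) : Prop :=
  compact [set: K] /\ hausdorff_space K /\
  closure [set t : K | exists x y, x <> y /\ e x y = t] = [set: K] /\
  (forall G : K -> R, continuous G -> bounded_cont_tilde d (fun x y => G (e x y))) /\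
  (forall f : M -> M -> R, bounded_cont_tilde d f ->
     exists2 G : K -> R, continuous G & forall x y, x <> y -> G (e x y) = f x y).

Definition samuel_compactification (R : realType) (M : Type) (d : M -> M -> R)
    (Ku : ptopologicalType) (u : M -> Ku) : Prop :=
  compact [set: Ku] /\ hausdorff_space Ku /\
  closure (range u) = [set: Ku] /\
  (forall G : Ku -> R, continuous G -> bounded_unif_cont d (G \o u)) /\
  (forall f : M -> R, bounded_unif_cont d f ->
     exists2 G : Ku -> R, continuous G & forall x, G (u x) = f x).

Notation borel K := (g_sigma_algebraType (@open K)).

Definition radon (R : realType) (K : ptopologicalType)
    (mu : {measure set (borel K) -> \bar R}) : Prop :=
  (mu [set: K] < +oo)%E /\
  forall A : set (borel K), measurable A ->
    mu A = ereal_sup [set mu C | C in [set C : set K | compact C /\ C `<=` A]].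

Definition concentrated (R : realType) (K : ptopologicalType)
    (mu : {measure set (borel K) -> \bar R}) (A : set K) : Prop :=
  exists2 B : set (borel K), measurable B & B `<=` A /\ mu (~` B) = 0%E.

Definition integ (R : realType) (K : ptopologicalType)
    (mu : {measure set (borel K) -> \bar R}) (g : K -> R) : \bar R :=
  (\int[mu]_(x in [set: borel K]) (g x)%:E)%E.

Definition coneG (R : realType) (M : Type) (d : M -> M -> R)
    (K : ptopologicalType) (e : M -> M -> K) (g : K -> R) : Prop :=
  continuous g /\
  forall x w y, x <> w -> w <> y -> x <> y ->
    d x y * g (e x y) <= d x w * g (e x w) + d w y * g (e w y).

Definition prec (R : realType) (M : Type) (d : M -> M -> R)
    (K : ptopologicalType) (e : M -> M -> K)
    (mu nu : {measure set (borel K) -> \bar R}) : Prop :=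
  forall g, coneG d e g -> (integ mu g <= integ nu g)%E.

(* Phi^* nu = Phi^* mu : the functionals f |-> <Phi f, .> agree on Lip_0(M); *)
(* Phi f is the (unique) continuous extension of (f x - f y)/d(x,y).        *)
Definition same_Phi_star (R : realType) (M : Type) (d : M -> M -> R) (o : M)
    (K : ptopologicalType) (e : M -> M -> K)
    (mu nu : {measure set (borel K) -> \bar R}) : Prop :=
  forall f : M -> R, lip0 d o f ->
  forall G : K -> R, continuous G ->
    (forall x y, x <> y -> G (e x y) = (f x - f y) / d x y) ->
    integ mu G = integ nu G.

Definition prec_minimal (R : realType) (M : Type) (d : M -> M -> R)
    (K : ptopologicalType) (e : M -> M -> K)
    (mu : {measure set (borel K) -> \bar R}) : Prop :=
  forall nu : {measure set (borel K) -> \bar R}, radon nu ->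
    prec d e nu mu -> prec d e mu nu.

(* Main.v *)
Require Import Defs.
From HB Require Import structures.
From mathcomp Require Import all_boot all_order all_algebra.
From mathcomp Require Import all_classical all_reals all_analysis.
From mathcomp Require Import measurable_realfun.
From mathcomp Require Import ring lra.
Import Order.TTheory GRing.Theory Num.Theory numFieldNormedType.Exports.
Local Open Scope classical_set_scope.
Local Open Scope ring_scope.
Lemma dense_le0 {R : realType} {M : Type} {d : M -> M -> R}
  {K : ptopologicalType} {e : M -> M -> K} (hK : stone_cech_tilde d e) (h : K -> R) :
  continuous h -> (forall x y, x <> y -> h (e x y) <= 0) -> forall t, h t <= 0.
Proof.
move=> ch hle t; rewrite leNgt; apply/negP => ht.
have nb : \forall s \near t, 0 < h s := @cvgr_gt _ _ _ (nbhs_filter t) _ (h t) (ch t) 0 ht.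
have [_ [_ [cl _]]] := hK.
have : closure [set s | exists x y, x <> y /\ e x y = s] t by rewrite cl.
move=> /(_ _ nb) [s [[x [y [xy <-]]] /= hs]]; move: hs; rewrite ltNge hle //.
Qed.

Lemma cont_bound {R : realType} {M : Type} {d : M -> M -> R}
  {K : ptopologicalType} {e : M -> M -> K} (hK : stone_cech_tilde d e) (G : K -> R) :
  continuous G -> exists C, forall t, `|G t| <= C.
Proof.
move=> cG; have [_ [_ [_ [/(_ G cG) [[C hC] _] _]]]] := hK.
exists C => t; rewrite ler_norml; apply/andP; split.
- have : - G t - C <= 0.
    apply: (dense_le0 hK (fun s => - G s - C)) => [|x y xy].
      by move=> s; exact: (continuousB (continuousN (cG s)) (@cst_continuous _ _ C s)).
    by have := hC x y xy; rewrite ler_norml => /andP[]; lra.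
  lra.
- have : G t - C <= 0.
    apply: (dense_le0 hK (fun s => G s - C)) => [|x y xy].
      by move=> s; exact: (continuousB (cG s) (@cst_continuous _ _ C s)).
    by have := hC x y xy; rewrite ler_norml => /andP[]; lra.
  lra.
Qed.

Lemma cont_meas {R : realType} {K : ptopologicalType} (g : K -> R) :
  continuous g -> measurable_fun [set: borel K] g.
Proof.
move=> cg; apply: (measurability _ (RGenOpens.measurableE R)).
move=> _ [_ [a [b ->]] <-]; rewrite setTI.
apply: sub_sigma_algebra.
by move/continuousP: cg; apply; exact: interval_open.
Qed.

Lemma cont_int {R : realType} {M : Type} {d : M -> M -> R}
  {K : ptopologicalType} {e : M -> M -> K} (hK : stone_cech_tilde d e)
  (mu : {measure set (borel K) -> \bar R}) (fmu : (mu [set: K] < +oo)%E)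
  (G : K -> R) : continuous G -> mu.-integrable [set: borel K] (EFin \o G).
Proof.
move=> cG; have [C hC] := cont_bound hK G cG.
apply: measurable_bounded_integrable => //; first exact: cont_meas.
apply: filterS (nbhs_pinfty_ge (num_real C)) => N CN x _ /=.
exact: le_trans (hC x) CN.
Qed.

Lemma core_ineq {R : realType} {M : Type} {d : M -> M -> R}
  {K : ptopologicalType} {e : M -> M -> K} (hK : stone_cech_tilde d e)
  (mu nu : {measure set (borel K) -> \bar R})
  (fmu : (mu [set: K] < +oo)%E) (fnu : (nu [set: K] < +oo)%E)
  (g G : K -> R) (cg : continuous g) (cG : continuous G)
  (Gle : forall t, G t <= g t) (B : set (borel K)) (mB : measurable B)
  (Beq : forall t, B t -> G t = g t) (null : mu (~` B) = 0%E)
  (eqG : integ nu G = integ mu G) : (integ mu g <= integ nu g)%E.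
Proof.
have -> : integ mu g = integ mu G.
  rewrite /integ; apply: ae_eq_integral => //.
  - apply/measurable_EFinP; exact: cont_meas.
  - apply/measurable_EFinP; exact: cont_meas.
  exists (~` B); split => //; first exact: measurableC.
  move=> t /= nt Bt; apply: nt => _.
  by rewrite Beq.
rewrite -eqG /integ; apply: le_integral => //.
- exact: (cont_int hK nu fnu G cG).
- exact: (cont_int hK nu fnu g cg).
by move=> t _; rewrite lee_fin.
Qed.
Lemma phi_bct {R : realType} {M : Type} {d : M -> M -> R} (hd : is_metric d)
  (f : M -> R) (L : R) (hL : forall x y, `|f x - f y| <= L * d x y) :
  bounded_cont_tilde d (fun x y => (f x - f y) / d x y).
Proof.
have [d0 [dsym dtri]] := hd.
have dge0 : forall x y, 0 <= d x y.
  move=> x y; have := dtri x y x; rewrite dsym (proj2 (d0 x x) erefl); lra.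
have dpos : forall x y, x <> y -> 0 < d x y.
  move=> x y xy; rewrite lt_neqAle dge0 andbT; apply/eqP => /esym/d0; exact: xy.
set L' := `|L| + 1.
have L'pos : 0 < L' by rewrite /L'; have := normr_ge0 L; lra.
have hL' : forall x y, `|f x - f y| <= L' * d x y.
  move=> x y; apply: (le_trans (hL x y)); apply: ler_wpM2r => //.
  rewrite /L'; have := ler_norm L; lra.
split.
  exists L' => x y xy; rewrite normrM normfV (gtr0_norm (dpos _ _ xy)).
  by rewrite ler_pdivrMr ?dpos.
move=> x y xy eps eps0.
set D := d x y; have D0 : 0 < D by exact: dpos.
set del := Num.min (D / 4) (eps * D / (8 * L')).
have del0 : 0 < del by rewrite lt_min; apply/andP; split;
  [exact: divr_gt0 | apply: divr_gt0; [exact: mulr_gt0|exact: mulr_gt0]].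
have del1 : del <= D / 4 by rewrite ge_min lexx.
have del2 : 8 * L' * del <= eps * D.
  rewrite mulrC -ler_pdivlMr; last exact: mulr_gt0.
  by rewrite ge_min lexx orbT.
exists del => // x' y' x'y'.
set a := d x x'; set b := d y y'; set D' := d x' y'.
move=> hx hy.
set A := f x - f y; set A' := f x' - f y'.
have a0 : 0 <= a by exact: dge0.
have b0 : 0 <= b by exact: dge0.
have D'0 : 0 < D' by exact: dpos.
have h1 : `|D' - D| <= a + b.
  rewrite ler_norml; apply/andP; split.
    have := dtri x x' y; have := dtri x' y' y; rewrite /D /D' /a /b (dsym y' y).
    lra.
  have := dtri x' x y'; have := dtri x y y'; rewrite /D /D' /a /b (dsym x' x).
  lra.
have h2 : `|A - A'| <= L' * (a + b).
  have -> : A - A' = (f x - f x') - (f y - f y') by rewrite /A /A'; ring.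
  apply: le_trans (ler_normB _ _) _.
  by have := hL' x x'; have := hL' y y'; rewrite /a /b; lra.
have h3 : `|A| <= L' * D by exact: hL'.
have hD' : D / 2 <= D'.
  have := h1; rewrite ler_norml => /andP[h _]; lra.
set N := A * (D' - D) + D * (A - A').
have eN : A / D - A' / D' = N / (D * D').
  rewrite /N; field; apply/andP; split; apply/eqP; lra.
have hN : `|N| <= 2 * L' * D * (a + b).
  rewrite /N; apply: le_trans (ler_normD _ _) _; rewrite !normrM (ger0_norm (ltW D0)).
  have e1 : `|A| * `|D' - D| <= L' * D * (a + b).
    apply: ler_pM => //; lra.
  have e2 : D * `|A - A'| <= D * (L' * (a + b)) by apply: ler_wpM2l => //; lra.
  lra.
have hab : 2 * L' * D * (a + b) < 4 * L' * D * del.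
  have : a + b < 2 * del by lra.
  rewrite -(ltr_pM2l (_ : 0 < 2 * L' * D)); last by apply: mulr_gt0 => //; lra.
  lra.
have hfin : 4 * L' * D * del <= eps * D * D'.
  have e1 : eps * D * (D / 2) <= eps * D * D'.
    by apply: ler_wpM2l => //; apply: mulr_ge0; lra.
  have e2 : 8 * L' * del * D <= eps * D * D by apply: ler_wpM2r => //; lra.
  lra.
rewrite eN normrM normfV (gtr0_norm (mulr_gt0 D0 D'0)) ltr_pdivrMr; last exact: mulr_gt0.
lra.
Qed.
Lemma samuel_sep {R : realType} {M : Type} {d : M -> M -> R}
  {Ku : ptopologicalType} {u : M -> Ku} (hKu : samuel_compactification d u)
  (y : M) (GF : Ku -> R) (cGF : continuous GF)
  (hGF : forall x, GF (u x) = Num.min (d x y) 1) :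
  forall xi, GF xi = 0 -> xi = u y.
Proof.
move=> xi GF0; apply: contrapT => xy.
have [cpt [haus [dense [toU _]]]] := hKu.
have nrm := compact_normal haus cpt.
have acc := hausdorff_accessible haus.
have cr := @normal_completely_regular R _ nrm acc.
have sep := cr xi [set u y] (@accessible_closed_set1 Ku acc (u y)) xy.
have [H [cH rH H0 H1]] := (@uniform_separatorP _ R _ _).1 sep.
have Hxi : H xi = 0 by apply: H0; exists xi.
have Huy : H (u y) = 1 by apply: H1; exists (u y).
have [_ uc] := toU H cH.
have [del del0 hdel] := uc (1/2) ltac:(lra).
set m := Num.min del 1.
have m0 : 0 < m by rewrite lt_min del0 ltr01.
have nb1 : \forall s \near xi, GF s < m.
  by apply: (@cvgr_lt _ _ _ (nbhs_filter xi) _ (GF xi) (cGF xi)); rewrite GF0.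
have nb2 : \forall s \near xi, H s < 1/2.
  by apply: (@cvgr_lt _ _ _ (nbhs_filter xi) _ (H xi) (cH xi)); rewrite Hxi; lra.
have nb := @filterI _ _ (nbhs_filter xi) _ _ nb1 nb2.
have : closure (range u) xi by rewrite dense.
move=> /(_ _ nb) [_ [[x _ <-] [/= h1 h2]]].
rewrite hGF in h1.
have dxy : d x y < del.
  move: h1; rewrite /m; have [le1|lt1] := leP (d x y) 1.
    by rewrite lt_min => /andP[].
  by rewrite lt_min ltxx andbF.
have := hdel x y dxy; rewrite /= Huy ltr_norml => /andP[hh _].
move: h2 hh; lra.
Qed.
Lemma dist_fun {R : realType} {M : Type} {d : M -> M -> R} (hd : is_metric d)
  {Ku : ptopologicalType} {u : M -> Ku} (hKu : samuel_compactification d u)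
  (y : M) : exists2 GF : Ku -> R, continuous GF & forall x, GF (u x) = Num.min (d x y) 1.
Proof.
have [d0 [dsym dtri]] := hd.
have [_ [_ [_ [_ ext]]]] := hKu; apply: ext; split.
  exists 1 => x; have [le|lt] := leP (d x y) 1; last by rewrite normr1.
  have := dtri x y x; rewrite (dsym y x) (proj2 (d0 x x) erefl) => h.
  rewrite ger0_norm //; lra.
move=> eps eps0; exists eps => // x z hxz.
have h1 := dtri x z y; have h2 := dtri z x y; rewrite (dsym z x) in h2.
have [le|lt] := leP (d x y) 1; have [le'|lt'] := leP (d z y) 1;
  rewrite ltr_norml; apply/andP; split; lra.
Qed.

Lemma eq_at {R : realType} {M : Type} {d : M -> M -> R}
  {K : ptopologicalType} {e : M -> M -> K} (hK : stone_cech_tilde d e)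
  (h P Q : K -> R) (ch : continuous h) (cP : continuous P) (cQ : continuous Q)
  (t : K) (Pt : 0 < P t) (Qt : Q t = 0) (kap : R) (kap0 : 0 <= kap)
  (hb : forall a b, a <> b -> forall al eta, 0 < al -> al <= 1 -> 0 < eta ->
     eta <= al / 4 -> al / 2 < P (e a b) -> Q (e a b) < eta ->
     h (e a b) <= kap * eta / al) : h t <= 0.
Proof.
rewrite leNgt; apply/negP => ht.
set al := Num.min (P t) 1.
have al0 : 0 < al by rewrite lt_min Pt ltr01.
have al1 : al <= 1 by rewrite ge_min lexx orbT.
have alP : al <= P t by rewrite ge_min lexx.
set eps := h t.
have eps0 : 0 < eps by [].
clear ht.
set eta := Num.min (al / 4) (eps * al / (2 * (kap + 1))).
have eta0 : 0 < eta.
  rewrite lt_min; apply/andP; split; first by apply: divr_gt0.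
  by apply: divr_gt0; [apply: mulr_gt0|apply: mulr_gt0 => //; lra].
have eta1 : eta <= al / 4 by rewrite ge_min lexx.
have eta2 : eta * (2 * (kap + 1)) <= eps * al.
  rewrite -ler_pdivlMr; last by apply: mulr_gt0 => //; lra.
  by rewrite ge_min lexx orbT.
have nb1 : \forall s \near t, eps / 2 < h s.
  by apply: (@cvgr_gt _ _ _ (nbhs_filter t) _ (h t) (ch t)); rewrite -/eps; lra.
have nb2 : \forall s \near t, al / 2 < P s.
  by apply: (@cvgr_gt _ _ _ (nbhs_filter t) _ (P t) (cP t)); lra.
have nb3 : \forall s \near t, Q s < eta.
  by apply: (@cvgr_lt _ _ _ (nbhs_filter t) _ (Q t) (cQ t)); rewrite Qt.
have nb := @filterI _ _ (nbhs_filter t) _ _ (@filterI _ _ (nbhs_filter t) _ _ nb1 nb2) nb3.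
have [_ [_ [cl _]]] := hK.
have : closure [set s | exists x y, x <> y /\ e x y = s] t by rewrite cl.
move=> /(_ _ nb) [s [[a [b [ab <-]]] [[/= hh hP] hQ]]].
have := hb a b ab al eta al0 al1 eta0 eta1 hP hQ.
have : kap * eta / al < eps / 2.
  rewrite ltr_pdivrMr //.
  have : kap * eta * 2 < eta * (2 * (kap + 1)) by nra.
  lra.
lra.
Qed.
Lemma metric_facts {R : realType} {M : Type} {d : M -> M -> R} (hd : is_metric d) :
  (forall x, d x x = 0) /\ (forall x y, 0 <= d x y) /\ (forall x y, x <> y -> 0 < d x y).
Proof.
have [d0 [dsym dtri]] := hd.
have dxx : forall x, d x x = 0 by move=> x; exact: (proj2 (d0 x x) erefl).
have dge0 : forall x y, 0 <= d x y.
  move=> x y; have := dtri x y x; rewrite (dsym y x) dxx; lra.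
split => //; split => // x y xy; rewrite lt_neqAle dge0 andbT.
by apply/eqP => /esym/d0; exact: xy.
Qed.

Lemma rho_sum {R : realType} {M : Type} {d : M -> M -> R}
  (three : exists a b c : M, [/\ a <> b, b <> c & a <> c])
  {K : ptopologicalType} {e : M -> M -> K} (g : K -> R) (hg : coneG d e g) :
  forall z y, z <> y -> 0 <= d z y * g (e z y) + d y z * g (e y z).
Proof.
move=> z y zy.
have [w [wz wy]] : exists w, w <> z /\ w <> y.
  apply: contrapT => nw.
  have key : forall v, v = z \/ v = y.
    move=> v; apply: contrapT => hv; apply: nw; exists v.
    by split => h; apply: hv; [left|right].
  have [a [b [c [ab bc ac]]]] := three.
  by case: (key a) (key b) (key c) ab bc ac => -> [->|->] [->|->].
have [_ tri] := hg.
have h1 := tri z y w zy (nesym wy) (nesym wz).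
have h2 := tri y z w (nesym zy) (nesym wz) (nesym wy).
lra.
Qed.

Lemma integ_neg {R : realType} {M : Type} {d : M -> M -> R}
  {K : ptopologicalType} {e : M -> M -> K} (hK : stone_cech_tilde d e)
  (mu : {measure set (borel K) -> \bar R}) (fmu : (mu [set: K] < +oo)%E)
  (G : K -> R) (cG : continuous G) :
  integ mu (fun t => - G t) = (- integ mu G)%E.
Proof.
rewrite /integ.
under eq_integral do rewrite EFinN -mulN1e.
rewrite integralZl //; first by rewrite mulN1e.
exact: (cont_int hK mu fmu G cG).
Qed.
Lemma finish {R : realType} {M : Type} {d : M -> M -> R} {o : M} (hd : is_metric d)
  {K : ptopologicalType} {e : M -> M -> K} (hK : stone_cech_tilde d e)
  (mu nu : {measure set (borel K) -> \bar R})
  (fmu : (mu [set: K] < +oo)%E) (fnu : (nu [set: K] < +oo)%E)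
  (g : K -> R) (hg : coneG d e g) (C : R)
  (hC : forall a b, a <> b -> `|g (e a b)| <= C)
  (f0 : M -> R) (hA : forall x z, x <> z -> f0 x - f0 z <= d x z * g (e x z))
  (B : set (borel K)) (mB : measurable B) (null : mu (~` B) = 0%E)
  (HB : forall GP : K -> R, continuous GP ->
     (forall x z, x <> z -> GP (e x z) = (f0 x - f0 z) / d x z) ->
     forall t, B t -> g t <= GP t)
  (hsame : same_Phi_star d o e nu mu) : (integ mu g <= integ nu g)%E.
Proof.
have [dxx [dge0 dpos]] := metric_facts hd.
have [_ [dsym _]] := hd.
have [cg _] := hg.
have rhoC : forall a b, a <> b -> d a b * g (e a b) <= C * d a b.
  move=> a b ab; rewrite mulrC; apply: ler_wpM2r => //.
  by have := hC a b ab; rewrite ler_norml => /andP[].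
set f := fun x => f0 x - f0 o.
have lipf : lip0 d o f.
  split; first by rewrite /f subrr.
  exists C => x z; have [->|xz] := pselect (x = z).
    by rewrite subrr normr0 dxx mulr0.
  have := hA x z xz; have := hA z x (nesym xz); have := rhoC x z xz.
  have := rhoC z x (nesym xz); rewrite (dsym z x) => h1 h2 h3 h4.
  rewrite /f ler_norml; apply/andP; split; lra.
have [_ [_ [_ [_ ext]]]] := hK.
have [L hL] := lipf.2.
have [GP cGP hGP] := ext _ (phi_bct hd f L hL).
have hGP' : forall x z, x <> z -> GP (e x z) = (f0 x - f0 z) / d x z.
  by move=> x z xz; rewrite hGP // /f; congr (_ / _); ring.
have Gle : forall t, GP t <= g t.
  move=> t; rewrite -subr_le0; move: t.
  apply: (dense_le0 hK (fun s => GP s - g s)).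
    by move=> s; exact: (continuousB (cGP s) (cg s)).
  move=> x z xz; rewrite hGP' // subr_le0 ler_pdivrMr ?dpos // mulrC.
  exact: hA.
apply: (core_ineq hK mu nu fmu fnu g GP cg cGP Gle B mB _ null).
  by move=> t Bt; apply: le_anti; rewrite Gle HB.
exact: (hsame f lipf GP cGP hGP).
Qed.
Lemma cont_norm_comp {R : realType} {K Ku : ptopologicalType} (p : K -> Ku) (GF : Ku -> R) :
  continuous p -> continuous GF -> continuous (fun s => `|GF (p s)|).
Proof.
move=> cp cGF s.
exact: (continuous_comp (continuous_comp (cp s) (cGF (p s))) (@norm_continuous _ R^o _)).
Qed.

Lemma case1 {R : realType} {M : Type} {d : M -> M -> R} (hd : is_metric d)
  (three : exists a b c : M, [/\ a <> b, b <> c & a <> c])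
  {K : ptopologicalType} {e : M -> M -> K} (hK : stone_cech_tilde d e)
  {Ku : ptopologicalType} {u : M -> Ku} (hKu : samuel_compactification d u)
  (p1 p2 : K -> Ku) (hp1 : continuous p1) (hp2 : continuous p2)
  (hp1e : forall x y, x <> y -> p1 (e x y) = u x)
  (hp2e : forall x y, x <> y -> p2 (e x y) = u y)
  (g : K -> R) (hg : coneG d e g) (C : R) (C0 : 0 <= C)
  (hC : forall a b, a <> b -> `|g (e a b)| <= C) (y : M) :
  let f0 := fun x => if pselect (x = y) then 0 else d x y * g (e x y) in
  (forall x z, x <> z -> f0 x - f0 z <= d x z * g (e x z)) /\
  (forall GP : K -> R, continuous GP ->
     (forall x z, x <> z -> GP (e x z) = (f0 x - f0 z) / d x z) ->
     forall t, p1 t <> u y -> p2 t = u y -> g t <= GP t).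
Proof.
move=> f0.
have [dxx [dge0 dpos]] := metric_facts hd.
have [_ [dsym dtri]] := hd.
have [cg tri] := hg.
have rs := rho_sum three g hg.
have rhoC : forall a b, a <> b -> d a b * g (e a b) <= C * d a b.
  move=> a b ab; rewrite mulrC; apply: ler_wpM2r => //.
  by have := hC a b ab; rewrite ler_norml => /andP[].
have rhoC' : forall a b, a <> b -> - (C * d a b) <= d a b * g (e a b).
  move=> a b ab; have := hC a b ab; rewrite ler_norml => /andP[h _].
  have := dge0 a b; nra.
split.
  move=> x z xz; rewrite /f0; case: pselect => [xy|xy] /=; case: pselect => [zy|zy] /=.
  - by case: xz; rewrite xy zy.
  - by subst x; rewrite sub0r; have := rs z y zy; lra.
  - by subst z; rewrite subr0.
  - by rewrite lerBlDr; apply: tri.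
move=> GP cGP hGP t ht1 ht2.
have [GF cGF hGF] := dist_fun hd hKu y.
rewrite -subr_le0.
apply: (eq_at hK (fun s => g s - GP s) (fun s => `|GF (p1 s)|) (fun s => GF (p2 s))
  _ _ _ t _ _ (8 * C)).
- by move=> s; exact: (continuousB (cg s) (cGP s)).
- exact: cont_norm_comp.
- by move=> s; exact: (continuous_comp (hp2 s) (cGF (p2 s))).
- rewrite normr_gt0; apply/eqP => h0; apply: ht1.
  exact: (samuel_sep hKu y GF cGF hGF).
- by rewrite /= ht2 hGF dxx; case: leP => // h; lra.
- lra.
move=> a b ab al eta al0 al1 eta0 eta1; rewrite /= hp1e // hp2e // !hGF => hP hQ.
have hay : al / 2 < d a y.
  apply: (lt_le_trans hP); rewrite ger0_norm; first by rewrite ge_min lexx.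
  by rewrite le_min dge0 ler01.
have hby : d b y < eta.
  move: hQ; rewrite gt_min => /orP[//|h]; lra.
have ay : a <> y by move=> ay; rewrite ay dxx in hay; lra.
rewrite hGP // /f0; case: (pselect (a = y)) => [/ay//|_] /=; case: (pselect (b = y)) => [by_|nby] /=.
  subst b; rewrite subr0 [d a y * _]mulrC mulfK ?gt_eqF ?dpos // subrr. apply: mulr_ge0; last by rewrite invr_ge0; lra.
  by apply: mulr_ge0; lra.
have t1 := tri a y b ay (nesym nby) ab.
have t2 := rhoC y b (nesym nby); have t3 := rhoC b y nby.
rewrite (dsym y b) in t1 t2.
have hD : al / 4 <= d a b.
  have := dtri a b y; lra.
have D0 : 0 < d a b by exact: dpos.
have -> : g (e a b) - (d a y * g (e a y) - d b y * g (e b y)) / d a b =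
  (d a b * g (e a b) - d a y * g (e a y) + d b y * g (e b y)) / d a b.
  by field; rewrite gt_eqF.
rewrite ler_pdivrMr //.
have e1 : 8 * C * eta / al * (al / 4) = 2 * C * eta by field; rewrite gt_eqF.
have e2 : 8 * C * eta / al * (al / 4) <= 8 * C * eta / al * d a b.
  apply: ler_wpM2l => //; apply: divr_ge0; last lra.
  by apply: mulr_ge0; lra.
have e3 : C * d b y <= C * eta by apply: ler_wpM2l => //; lra.
lra.
Qed.
Lemma case2 {R : realType} {M : Type} {d : M -> M -> R} (hd : is_metric d)
  (three : exists a b c : M, [/\ a <> b, b <> c & a <> c])
  {K : ptopologicalType} {e : M -> M -> K} (hK : stone_cech_tilde d e)
  {Ku : ptopologicalType} {u : M -> Ku} (hKu : samuel_compactification d u)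
  (p1 p2 : K -> Ku) (hp1 : continuous p1) (hp2 : continuous p2)
  (hp1e : forall x y, x <> y -> p1 (e x y) = u x)
  (hp2e : forall x y, x <> y -> p2 (e x y) = u y)
  (g : K -> R) (hg : coneG d e g) (C : R) (C0 : 0 <= C)
  (hC : forall a b, a <> b -> `|g (e a b)| <= C) (x0 : M) :
  let f0 := fun z => - (if pselect (z = x0) then 0 else d x0 z * g (e x0 z)) in
  (forall x z, x <> z -> f0 x - f0 z <= d x z * g (e x z)) /\
  (forall GP : K -> R, continuous GP ->
     (forall x z, x <> z -> GP (e x z) = (f0 x - f0 z) / d x z) ->
     forall t, p1 t = u x0 -> p2 t <> u x0 -> g t <= GP t).
Proof.
move=> f0.
have [dxx [dge0 dpos]] := metric_facts hd.
have [_ [dsym dtri]] := hd.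
have [cg tri] := hg.
have rs := rho_sum three g hg.
have rhoC : forall a b, a <> b -> d a b * g (e a b) <= C * d a b.
  move=> a b ab; rewrite mulrC; apply: ler_wpM2r => //.
  by have := hC a b ab; rewrite ler_norml => /andP[].
split.
  move=> x z xz; rewrite /f0; case: pselect => [xy|xy] /=; case: pselect => [zy|zy] /=.
  - by case: xz; rewrite xy zy.
  - by subst x; rewrite oppr0 sub0r opprK.
  - by subst z; rewrite oppr0 subr0; have := rs x x0 xy; lra.
  - have := tri x0 x z (nesym xy) xz (nesym zy); lra.
move=> GP cGP hGP t ht1 ht2.
have [GF cGF hGF] := dist_fun hd hKu x0.
rewrite -subr_le0.
apply: (eq_at hK (fun s => g s - GP s) (fun s => `|GF (p2 s)|) (fun s => GF (p1 s))
  _ _ _ t _ _ (8 * C)).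
- by move=> s; exact: (continuousB (cg s) (cGP s)).
- exact: cont_norm_comp.
- by move=> s; exact: (continuous_comp (hp1 s) (cGF (p1 s))).
- rewrite normr_gt0; apply/eqP => h0; apply: ht2.
  exact: (samuel_sep hKu x0 GF cGF hGF).
- by rewrite /= ht1 hGF dxx; case: leP => // h; lra.
- lra.
move=> a b ab al eta al0 al1 eta0 eta1; rewrite /= hp1e // hp2e // !hGF => hP hQ.
have hbx : al / 2 < d b x0.
  apply: (lt_le_trans hP); rewrite ger0_norm; first by rewrite ge_min lexx.
  by rewrite le_min dge0 ler01.
have hax : d a x0 < eta.
  move: hQ; rewrite gt_min => /orP[//|h]; lra.
have bx : b <> x0 by move=> bx; rewrite bx dxx in hbx; lra.
have D0 : 0 < d a b by exact: dpos.
rewrite hGP //.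
have -> : forall N, g (e a b) - N / d a b = (d a b * g (e a b) - N) / d a b.
  by move=> N; field; rewrite gt_eqF.
rewrite /f0; case: (pselect (b = x0)) => [/bx//|_] /=.
case: (pselect (a = x0)) => [ax|nax] /=.
  subst a; rewrite oppr0 sub0r opprK subrr mul0r.
  apply: mulr_ge0; last by rewrite invr_ge0; lra.
  by apply: mulr_ge0; lra.
have t1 := tri a x0 b nax (nesym bx) ab.
have t2 := rhoC a x0 nax; have t3 := rhoC x0 a (nesym nax).
rewrite (dsym x0 a) in t3 *.
have hD : al / 4 <= d a b.
  have := dtri b a x0; rewrite (dsym b a); lra.
rewrite ler_pdivrMr //.
have e1 : 8 * C * eta / al * (al / 4) = 2 * C * eta by field; rewrite gt_eqF.
have e2 : 8 * C * eta / al * (al / 4) <= 8 * C * eta / al * d a b.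
  apply: ler_wpM2l => //; apply: divr_ge0; last lra.
  by apply: mulr_ge0; lra.
have e3 : C * d a x0 <= C * eta by apply: ler_wpM2l => //; lra.
lra.
Qed.
Theorem proposition3p14 (R : realType) (M : Type) (d : M -> M -> R) (o : M)
  (hd : is_metric d) (hcomplete : complete_metric d)
  (three : exists a b c : M, [/\ a <> b, b <> c & a <> c])
  (K : ptopologicalType) (e : M -> M -> K) (hK : stone_cech_tilde d e)
  (Ku : ptopologicalType) (u : M -> Ku) (hKu : samuel_compactification d u)
  (p1 p2 : K -> Ku) (hp1 : continuous p1) (hp2 : continuous p2)
  (hp1e : forall x y, x <> y -> p1 (e x y) = u x)
  (hp2e : forall x y, x <> y -> p2 (e x y) = u y)
  (d0 : Ku -> \bar R) (hd0 : continuous d0)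
  (hd0u : forall x, d0 (u x) = (d x o)%:E)
  (mu : {measure set (borel K) -> \bar R}) (hmu : radon mu) :
  let RM := [set xi : Ku | (d0 xi < +oo)%E] in
  ((exists y : M, concentrated mu
       [set t : K | RM (p1 t) /\ p1 t <> u y /\ p2 t = u y]) \/
   (exists x : M, concentrated mu
       [set t : K | p1 t = u x /\ RM (p2 t) /\ p2 t <> u x])) ->
  (forall nu : {measure set (borel K) -> \bar R}, radon nu ->
     same_Phi_star d o e nu mu -> prec d e mu nu) /\
  prec_minimal d e mu.
Proof.
move=> RM conc.
have fmu := hmu.1.
have [dxx [dge0 dpos]] := metric_facts hd.
have part1 : forall nu : {measure set (borel K) -> \bar R}, radon nu ->
    same_Phi_star d o e nu mu -> prec d e mu nu.
  move=> nu hnu hsame g hg.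
  have [C hC] := cont_bound hK g hg.1.
  have C0 : 0 <= C := le_trans (normr_ge0 _) (hC (e o o)).
  have hC' : forall a b, a <> b -> `|g (e a b)| <= C by move=> *; apply: hC.
  case: conc => [[y [B mB [Bsub null]]] | [x0 [B mB [Bsub null]]]].
  - have [hA HB] := case1 hd three hK hKu p1 p2 hp1 hp2 hp1e hp2e g hg C C0 hC' y.
    apply: (finish hd hK mu nu fmu hnu.1 g hg C hC' _ hA B mB null _ hsame).
    move=> GP cGP hGP t Bt; have [_ [h1 h2]] := Bsub t Bt.
    exact: (HB GP cGP hGP t h1 h2).
  - have [hA HB] := case2 hd three hK hKu p1 p2 hp1 hp2 hp1e hp2e g hg C C0 hC' x0.
    apply: (finish hd hK mu nu fmu hnu.1 g hg C hC' _ hA B mB null _ hsame).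
    move=> GP cGP hGP t Bt; have [h1 [_ h2]] := Bsub t Bt.
    exact: (HB GP cGP hGP t h1 h2).
split => //.
move=> nu hnu hprec; apply: part1 => //.
move=> f lipf G cG hG.
have e' : forall a b, a <> b -> d a b * G (e a b) = f a - f b.
  by move=> a b ab; rewrite hG // mulrC divfK // gt_eqF // dpos.
have cone1 : coneG d e G.
  by split => // x w y xw wy xy; rewrite !e' //; lra.
have cone2 : coneG d e (fun t => - G t).
  split; first by move=> s; exact: (continuousN (cG s)).
  by move=> x w y xw wy xy; rewrite !mulrN !e' //; lra.
have h1 := hprec G cone1.
have h2 := hprec _ cone2.
rewrite /= !(integ_neg hK) // in h2; last exact: hnu.1.
apply/le_anti/andP; split => //.
by rewrite -leeN2.
Qed.
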